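(* Let $\mathcal{G}$ be an undirected connected weighted graph on $\{1,\dots,n\}$ with Laplacian $L$, let $A_i\in\mathbb{R}^{p\times d_i}$ for $i=1,\dots,n$ be such that $A=[A_1,\dots,A_n]$ has full row rank, and let $\mathbf{A}=\mathrm{diag}(A_1,\dots,A_n)$ and $\mathbf{L}=L\otimes I_p$. Then for every constant $c>0$, $\mathbf{A}\mathbf{A}^\top+c\mathbf{L}\succ0$.
   Context: The graph has symmetric adjacency matrix $[a_{ij}]$ with $a_{ij}\ge0$ ($a_{ij}>0$ iff $i$ and $j$ are neighbors), and Laplacian $L=\mathrm{diag}(\sum_j a_{ij})_i-[a_{ij}]$; connected means there is a path between any two vertices. $\mathbf{A}=\mathrm{diag}(A_1,\dots,A_n)$ is the block-diagonal matrix in $\mathbb{R}^{np\times\sum_i d_i}$. *)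

(* Defs.v *)
From HB Require Import structures.
From mathcomp Require Import all_boot all_order all_algebra.
Set Implicit Arguments. Unset Strict Implicit. Unset Printing Implicit Defensive.
Import Order.TTheory GRing.Theory Num.Theory.
Local Open Scope ring_scope.

Definition adjacency {R : realFieldType} {n : nat} (a : 'M[R]_n) : Prop :=
  a^T = a /\ forall i j, 0 <= a i j.

Definition connected_graph {R : realFieldType} {n : nat} (a : 'M[R]_n) : Prop :=
  forall i j : 'I_n, connect (fun k l => 0 < a k l) i j.

Definition laplacian {R : realFieldType} {n : nat} (a : 'M[R]_n) : 'M[R]_n :=
  \matrix_(i, j) ((i == j)%:R * (\sum_k a i k) - a i j).

Definition kron_eye {R : realFieldType} {n : nat} (p : nat) (L : 'M[R]_n)
  : 'M[R]_(\sum_(i < n) p) :=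
  \mxblock_(i < n, j < n) ((L i j)%:M : 'M[R]_p).

Definition blkdiag {R : realFieldType} {n p : nat} {d : 'I_n -> nat}
  (A : forall i : 'I_n, 'M[R]_(p, d i)) : 'M[R]_(\sum_(i < n) p, \sum_(i < n) d i) :=
  \mxblock_(i < n, j < n) (if i == j then A j else 0 : 'M[R]_(p, d j)).

Definition hcat {R : realFieldType} {n p : nat} {d : 'I_n -> nat}
  (A : forall i : 'I_n, 'M[R]_(p, d i)) : 'M[R]_(p, \sum_(i < n) d i) :=
  \mxrow_(j < n) A j.

Definition posdef {R : realFieldType} {m : nat} (M : 'M[R]_m) : Prop :=
  M^T = M /\ forall x : 'cV[R]_m, x != 0 -> 0 < (x^T *m M *m x) 0 0.

(* Main.v *)
Require Import Defs.
From HB Require Import structures.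
From mathcomp Require Import all_boot all_order all_algebra ring.
Import Order.TTheory GRing.Theory Num.Theory.
Local Open Scope ring_scope.
Lemma scal_lap (R : realFieldType) (n : nat) (a : 'M[R]_n) (u : 'I_n -> R) : a^T = a ->
  (\sum_i \sum_j laplacian a i j * (u i * u j)) *+ 2 =
  \sum_i \sum_j a i j * (u i - u j)^+2.
Proof.
move=> sym.
have aS i j : a j i = a i j by rewrite -{1}sym mxE.
have E1 : \sum_i \sum_j laplacian a i j * (u i * u j) =
   \sum_i \sum_j (a i j * u i ^+ 2 - a i j * (u i * u j)).
  apply: eq_bigr => i _.
  under eq_bigr do rewrite mxE mulrBl.
  rewrite sumrB [RHS]sumrB; congr (_ - _).
  rewrite (bigD1 i) //= [X in _ + X]big1; last by move=> j /negbTE ne; rewrite eq_sym ne mul0r mul0r.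
  by rewrite eqxx mul1r addr0 mulr_suml; apply: eq_bigr => j _; rewrite expr2.
have E2 : \sum_i \sum_j a i j * u i ^+ 2 = \sum_i \sum_j a i j * u j ^+ 2.
  by rewrite exchange_big /=; apply: eq_bigr => i _; apply: eq_bigr => j _; rewrite aS.
rewrite E1.
have -> : \sum_i \sum_j a i j * (u i - u j)^+2 =
   \sum_i \sum_j ((a i j * u i ^+ 2 - a i j * (u i * u j)) + (a i j * u j ^+ 2 - a i j * (u i * u j))).
  by apply: eq_bigr => i _; apply: eq_bigr => j _; rewrite sqrrB; ring.
under [RHS]eq_bigr do rewrite big_split /=.
rewrite big_split /= mulr2n; congr (_ + _).
have sB : forall f g : 'I_n -> 'I_n -> R, \sum_i \sum_j (f i j - g i j) = \sum_i \sum_j f i j - \sum_i \sum_j g i j.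
  by move=> f g; rewrite -sumrB; apply: eq_bigr => i _; rewrite sumrB.
by rewrite !sB E2.
Qed.

Lemma quadK (R : realFieldType) (n p : nat) (L : 'M[R]_n) (X : forall i : 'I_n, 'cV[R]_p) :
  ((\mxcol_i X i)^T *m kron_eye p L *m (\mxcol_i X i)) 0 0 =
  \sum_i \sum_j L i j * ((X i)^T *m X j) 0 0.
Proof.
rewrite tr_mxcol /kron_eye mul_mxrow_mxblock mul_mxrow_mxcol summxE exchange_big /=.
apply: eq_bigr => j _; rewrite mulmx_suml summxE; apply: eq_bigr => i _.
by rewrite mul_mx_scalar -scalemxAl mxE.
Qed.

Lemma quadB (R : realFieldType) (n p : nat) (d : 'I_n -> nat)
  (A : forall i : 'I_n, 'M[R]_(p, d i)) (X : forall i : 'I_n, 'cV[R]_p) :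
  ((\mxcol_i X i)^T *m (blkdiag A *m (blkdiag A)^T) *m (\mxcol_i X i)) 0 0 =
  \sum_i \sum_k (((X i)^T *m A i) 0 k) ^+ 2.
Proof.
have w : (\mxcol_i X i)^T *m blkdiag A = \mxrow_j ((X j)^T *m A j).
  rewrite tr_mxcol /blkdiag mul_mxrow_mxblock; apply: eq_mxrow => j.
  rewrite (bigD1 j) //= eqxx big1 ?addr0 // => i /negbTE ne.
  by rewrite ne mulmx0.
have w' : (blkdiag A)^T *m (\mxcol_i X i) = (\mxrow_j ((X j)^T *m A j))^T.
  by rewrite -w trmx_mul trmxK.
rewrite mulmxA w -mulmxA w' tr_mxrow mul_mxrow_mxcol summxE.
apply: eq_bigr => i _; rewrite mxE.
apply: eq_bigr => k _; rewrite [_^T _ _]mxE expr2 //.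
Qed.

Theorem lemma6 (R : realFieldType) (n p : nat) (a : 'M[R]_n)
  (d : 'I_n -> nat) (A : forall i : 'I_n, 'M[R]_(p, d i)) :
  adjacency a -> connected_graph a ->
  \rank (hcat A) = p ->
  forall c : R, 0 < c ->
  posdef (blkdiag A *m (blkdiag A)^T + c *: kron_eye p (laplacian a)).
Proof.
move=> [sym a_ge0] conn rk c c_gt0.
have aS i j : a j i = a i j by rewrite -{1}sym mxE.
split.
  rewrite raddfD /= linearZ /= trmx_mul trmxK; congr (_ + _ *: _).
  rewrite /kron_eye tr_mxblock; apply: eq_mxblock => i j.
  rewrite tr_scalar_mx !mxE aS eq_sym; by case: eqVneq => [->|]; rewrite ?mul0r.
move=> x xn0.
set X := fun i => submxcol x i.
have xE : x = \mxcol_i X i by rewrite /X submxcolK.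
rewrite xE mulmxDr mulmxDl -scalemxAr -scalemxAl [X in 0 < X]mxE [X in _ + X]mxE quadB quadK.
set S1 := \sum_i _.
set T := \sum_i _.
have S1ge0 : 0 <= S1 by apply: sumr_ge0 => i _; apply: sumr_ge0 => k _; apply: sqr_ge0.
have TE : T *+ 2 = \sum_k \sum_i \sum_j a i j * (X i k 0 - X j k 0) ^+ 2.
  have -> : T = \sum_k \sum_i \sum_j laplacian a i j * (X i k 0 * X j k 0).
    rewrite /T [RHS]exchange_big /=; apply: eq_bigr => i _.
    rewrite [RHS]exchange_big /=; apply: eq_bigr => j _.
    by rewrite [_ 0 0]mxE mulr_sumr; apply: eq_bigr => k _; rewrite [_^T _ _]mxE.
  rewrite -sumrMnl; apply: eq_bigr => k _; exact: scal_lap.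
have sq3 : forall f : 'I_p -> 'I_n -> 'I_n -> R, (forall k i j, 0 <= f k i j) ->
   0 <= \sum_k \sum_i \sum_j f k i j.
  by move=> f hf; do 3 (apply: sumr_ge0 => ? _); apply: hf.
have T2ge0 : 0 <= T *+ 2.
  by rewrite TE; apply: sq3 => k i j; apply: mulr_ge0 => //; apply: sqr_ge0.
have Tge0 : 0 <= T by move: T2ge0; rewrite -mulr_natr pmulr_lge0.
rewrite ltNge; apply/negP => Hle.
have cT0 : 0 <= c * T by rewrite mulr_ge0 // ltW.
have S10 : S1 = 0.
  by apply/eqP; rewrite eq_le S1ge0 andbT; apply: le_trans Hle; rewrite lerDl.
have cT00 : c * T = 0.
  by apply/eqP; rewrite eq_le cT0 andbT; apply: le_trans Hle; rewrite lerDr.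
have T0 : T = 0.
  by move/eqP: cT00; rewrite mulf_eq0 (negbTE (lt0r_neq0 c_gt0)) /= => /eqP.
have XA i : (X i)^T *m A i = 0.
  apply/matrixP => r k; rewrite (ord1 r) [RHS]mxE.
  have h2 : \sum_k (((X i)^T *m A i) 0 k) ^+ 2 = 0.
    move: S10; rewrite /S1 => S10.
    apply: (psumr_eq0P _ S10) => // j _; apply: sumr_ge0 => l _; apply: sqr_ge0.
  have h3 : (((X i)^T *m A i) 0 k) ^+ 2 = 0.
    by apply: (psumr_eq0P _ h2) => // l _; apply: sqr_ge0.
  by apply/eqP; rewrite -sqrf_eq0 h3.
have edge i j : 0 < a i j -> X i = X j.
  move=> aij; apply/matrixP => k r; rewrite (ord1 r).
  have Z : \sum_k \sum_i \sum_j a i j * (X i k 0 - X j k 0) ^+ 2 = 0.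
    by rewrite -TE T0 mul0rn.
  have h1 : \sum_i0 \sum_j0 a i0 j0 * (X i0 k 0 - X j0 k 0) ^+ 2 = 0.
    apply: (psumr_eq0P _ Z) => // l _; do 2 (apply: sumr_ge0 => ? _).
    by apply: mulr_ge0 => //; apply: sqr_ge0.
  have h2 : \sum_j0 a i j0 * (X i k 0 - X j0 k 0) ^+ 2 = 0.
    apply: (psumr_eq0P _ h1) => // l _; apply: sumr_ge0 => ? _.
    by apply: mulr_ge0 => //; apply: sqr_ge0.
  have h3 : a i j * (X i k 0 - X j k 0) ^+ 2 = 0.
    apply: (psumr_eq0P _ h2) => // l _.
    by apply: mulr_ge0 => //; apply: sqr_ge0.
  move/eqP: h3; rewrite mulf_eq0 (negbTE (lt0r_neq0 aij)) /= sqrf_eq0 subr_eq0.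
  by move/eqP.
have allEq i j : X i = X j.
  case/connectP: (conn i j) => q; elim: q i => [|l q IH] i /=; first by move=> _ ->.
  by case/andP => /edge -> pq /(IH _ pq).
have X0 i : X i = 0.
  have h : (X i)^T *m hcat A = 0 *m hcat A.
    rewrite mul0mx /hcat mul_mxrow; transitivity (\mxrow_j (0 : 'M[R]_(1, d j))); last exact: mxrow0.
    apply: eq_mxrow => j.
    by rewrite (allEq i j) XA.
  have rf : row_free (hcat A) by rewrite /row_free rk.
  by move/(row_free_inj rf)/(congr1 trmx): h; rewrite trmxK trmx0.
move/eqP: xn0; apply; rewrite xE -(mxcol0 (V:=R) (p_:=fun=> p) 1).
by apply: eq_mxcol => i; rewrite X0.
Qed.
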